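(* Let $4\le p<n$ and let $K_{n+1}=(V,E)$ be the complete graph on $V=\{0,\dots,n\}$. For every edge $e\in E\setminus\{[0,n]\}$, the nonnegativity constraint $y_e\ge 0$ defines a facet of $P^p_{[0,n]}(K_{n+1})$.
   Context: For an undirected graph $G=(V,E)$ with $V=\{0,\dots,n\}$, a $[0,n]$-$p$-path is a simple (undirected) path from $0$ to $n$ with exactly $p$ edges, and $P^p_{[0,n]}(G)\subseteq\mathbb{R}^E$ is the convex hull of the incidence vectors of all $[0,n]$-$p$-paths in $G$. A facet is a face of dimension $\dim P^p_{[0,n]}(K_{n+1})-1$. *)

(* Defs.v *)
From HB Require Import structures.
From mathcomp Require Import all_boot all_order all_algebra.
Set Implicit Arguments. Unset Strict Implicit. Unset Printing Implicit Defensive.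
Import Order.TTheory GRing.Theory Num.Theory.
Local Open Scope ring_scope.

(* Vertices of K_{n+1}: 'I_n.+1 = {0,...,n}. Edges: unordered pairs {i,j},
   represented as ordered pairs (i,j) with i < j. *)
Definition edge (n : nat) := {e : 'I_n.+1 * 'I_n.+1 | (e.1 < e.2)%N}.

Definition edge_joins (n : nat) (e : edge n) (u v : 'I_n.+1) : bool :=
  (((val e).1 == u) && ((val e).2 == v)) || (((val e).1 == v) && ((val e).2 == u)).

(* A [0,n]-p-path: a sequence of p+1 pairwise distinct vertices
   v_0 = 0, ..., v_p = n (consecutive vertices are adjacent in K_{n+1}). *)
Definition is_pathp (n p : nat) (t : p.+1.-tuple 'I_n.+1) : bool :=
  [&& uniq t, nth ord0 t 0 == ord0 & nth ord0 t p == ord_max].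

Definition incid (R : numDomainType) (n p : nat) (t : p.+1.-tuple 'I_n.+1)
  : {ffun edge n -> R} :=
  [ffun e => if [exists i : 'I_p, edge_joins e (nth ord0 t i) (nth ord0 t i.+1)]
             then 1 else 0].

Definition path_polytope (R : numDomainType) (n p : nat) (x : {ffun edge n -> R}) : Prop :=
  exists lam : {ffun p.+1.-tuple 'I_n.+1 -> R},
    [/\ forall t, 0 <= lam t,
        forall t, ~~ is_pathp t -> lam t = 0,
        \sum_t lam t = 1
      & forall e, x e = \sum_t lam t * incid R t e].

Definition aff_indep (R : numDomainType) (E : finType) (k : nat)
  (x : 'I_k -> {ffun E -> R}) : Prop :=
  forall c : 'I_k -> R, \sum_i c i = 0 -> (forall e, \sum_i c i * x i e = 0) ->
    forall i, c i = 0.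

Definition has_affdim (R : numDomainType) (E : finType) (S : {ffun E -> R} -> Prop)
  (d : nat) : Prop :=
  (exists x : 'I_d.+1 -> {ffun E -> R}, (forall i, S (x i)) /\ aff_indep x) /\
  (forall x : 'I_d.+2 -> {ffun E -> R}, (forall i, S (x i)) -> ~ aff_indep x).

(* Main.v *)
Require Import Defs.
From HB Require Import structures.
From mathcomp Require Import all_boot all_order all_algebra.
From mathcomp Require Import ring lra zify.
Import Order.TTheory GRing.Theory Num.Theory.
Local Open Scope ring_scope.
Set Implicit Arguments. Unset Strict Implicit. Unset Printing Implicit Defensive.

Section Basic.
Variables (R : realFieldType) (n : nat).
Local Notation V := 'I_n.+1.
Local Notation VV := {ffun edge n -> R^o}.

Definition Ev (a b : V) : VV := [ffun f => if edge_joins f a b then 1 else 0].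
Fixpoint Es (s : seq V) : VV :=
  match s with a :: ((b :: _) as s') => Ev a b + Es s' | _ => 0 end.
Definition D (a b x z : V) : VV := Ev a x + Ev x b - Ev a z - Ev z b.

Lemma joins_sym (f : edge n) (a b : V) : edge_joins f a b = edge_joins f b a.
Proof. by rewrite /edge_joins orbC. Qed.

Lemma Ev_sym a b : Ev a b = Ev b a.
Proof. by apply/ffunP => f; rewrite !ffunE joins_sym. Qed.

Lemma D_sym a b x z : D a b x z = D b a x z.
Proof. by rewrite /D (Ev_sym a x) (Ev_sym x b) (Ev_sym a z) (Ev_sym z b); apply/ffunP=> f; rewrite !ffunE; ring. Qed.

Lemma addE (u v : VV) f : (u + v) f = u f + v f. Proof. by rewrite ffunE. Qed.
Lemma subE (u v : VV) f : (u - v) f = u f - v f. Proof. by rewrite !ffunE. Qed.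
Lemma zeroE f : (0 : VV) f = 0. Proof. by rewrite ffunE. Qed.

Lemma Ev_ge0 a b f : 0 <= Ev a b f.
Proof. by rewrite ffunE; case: ifP. Qed.

Lemma Es_ge0 s f : 0 <= Es s f.
Proof.
elim: s => [|a [|b s] IH] /=; rewrite ?zeroE //.
by rewrite addE addr_ge0 ?Ev_ge0.
Qed.

Lemma Es_cons2 a b s : Es [:: a, b & s] = Ev a b + Es (b :: s). Proof. by []. Qed.

Lemma Es_cat A a s : Es (A ++ a :: s) = Es (rcons A a) + Es (a :: s).
Proof.
elim: A => [|x [|y A] IH] /=; first by rewrite add0r.
  by rewrite addr0.
move: IH => /= ->; by rewrite addrA.
Qed.

Lemma Es_repl A B a x b z :
  Es (A ++ [:: a, x, b & B]) - Es (A ++ [:: a, z, b & B]) = D a b x z.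
Proof.
rewrite !Es_cat /= /D; apply/ffunP => f; rewrite !ffunE; ring.
Qed.

Lemma Es_ge A B a b f : Ev a b f <= Es (A ++ [:: a, b & B]) f.
Proof.
rewrite Es_cat /= !addE; have h1 := Es_ge0 (rcons A a) f.
have h2 := Es_ge0 (b :: B) f; lra.
Qed.

Lemma Es_sum s : Es s = \sum_(i < (size s).-1) Ev (nth ord0 s i) (nth ord0 s i.+1).
Proof.
elim: s => [|a [|b s] IH]; rewrite ?big_ord0 //.
by rewrite Es_cons2 big_ord_recl IH.
Qed.


Lemma nth_inj (s : seq V) i j : uniq s -> (i < size s)%N -> (j < size s)%N ->
  nth ord0 s i = nth ord0 s j -> i = j.
Proof. by move=> us hi hj /eqP; rewrite nth_uniq // => /eqP. Qed.

Lemma joins_uniq_idx (s : seq V) (f : edge n) i j : uniq s ->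
  (i.+1 < size s)%N -> (j.+1 < size s)%N ->
  edge_joins f (nth ord0 s i) (nth ord0 s i.+1) ->
  edge_joins f (nth ord0 s j) (nth ord0 s j.+1) -> i = j.
Proof.
move=> us hi hj.
have hi' : (i < size s)%N by lia.
have hj' : (j < size s)%N by lia.
rewrite /edge_joins.
case/orP=> /andP[/eqP h1 /eqP h2]; case/orP=> /andP[/eqP h3 /eqP h4].
- by apply: (nth_inj us) => //; congruence.
- have e1 : i = j.+1 by apply: (nth_inj us) => //; congruence.
  have e2 : i.+1 = j by apply: (nth_inj us) => //; congruence.
  lia.
- have e1 : i.+1 = j by apply: (nth_inj us) => //; congruence.
  have e2 : i = j.+1 by apply: (nth_inj us) => //; congruence.
  lia.
- by apply: (nth_inj us) => //; congruence.
Qed.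

Lemma incid_Es p (t : p.+1.-tuple V) : uniq t -> (incid R t : VV) = Es t.
Proof.
move=> ut; apply/ffunP => f.
rewrite Es_sum size_tuple /= sum_ffunE ffunE.
case: existsP => [[i0 hi0] | hno].
  rewrite (bigD1 i0) //= ffunE hi0 big1 ?addr0 // => j hj; rewrite ffunE.
  case: ifP => // hj'; exfalso; move/eqP: hj; apply.
  apply: val_inj; apply: (joins_uniq_idx (f := f) ut) => //; by rewrite size_tuple ltnS ltn_ord.
rewrite big1 // => j _; rewrite ffunE; case: ifP => // h; exfalso; apply: hno; by exists j.
Qed.

Lemma exists_edge (a b : V) : a != b -> exists f : edge n, edge_joins f a b.
Proof.
move=> hab; case: (ltngtP a b) => h.
- by exists (exist _ (a, b) h); rewrite /edge_joins /= !eqxx.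
- by exists (exist _ (b, a) h); rewrite /edge_joins /= !eqxx orbT.
- by exfalso; move/negP: hab; apply; apply/eqP/val_inj.
Qed.

Lemma edge_unique (f g : edge n) a b : edge_joins f a b -> edge_joins g a b -> f = g.
Proof.
move: f g => [[f1 f2] hf] [[g1 g2] hg]; rewrite /edge_joins /=.
case/orP=> /andP[/eqP h1 /eqP h2]; case/orP=> /andP[/eqP h3 /eqP h4];
  apply: val_inj => /=; subst => //; exfalso; move: hf hg => /= hf hg; lia.
Qed.

Lemma sum_Ev (a b : V) : a != b -> \sum_f Ev a b f = 1.
Proof.
move=> hab; have [f0 hf0] := exists_edge hab.
rewrite (bigD1 f0) //= ffunE hf0 big1 ?addr0 // => g hg; rewrite ffunE.
case: ifP => // hg'; exfalso; move/eqP: hg; apply; exact: edge_unique hg' hf0.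
Qed.

Lemma sum_Es (s : seq V) : uniq s -> \sum_f Es s f = ((size s).-1)%:R.
Proof.
elim: s => [|a [|b s] IH] us; first (by rewrite big1 // => f _; rewrite zeroE);
  first (by rewrite big1 // => f _; rewrite zeroE).
under eq_bigr => f _ do rewrite Es_cons2 addE.
rewrite big_split /= sum_Ev; last by move: us => /= /andP[]; rewrite inE negb_or => /andP[].
rewrite IH; last by case/andP: us.
by rewrite /= -natr1 addrC.
Qed.


Lemma fill (X : seq V) m : (m + size X <= n.+1)%N ->
  exists F : seq V, [/\ uniq F, size F = m & forall x, x \in F -> x \notin X].
Proof.
move=> hm; set L := [seq i <- enum 'I_n.+1 | i \notin X].
have hL : (m <= size L)%N.
  have h1 := count_predC (mem X) (enum 'I_n.+1).
  have h2 : (count (mem X) (enum 'I_n.+1) <= size X)%N.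
    rewrite -size_filter; apply: uniq_leq_size; first exact/filter_uniq/enum_uniq.
    by move=> x; rewrite mem_filter => /andP[].
  rewrite size_enum_ord in h1.
  have -> : size L = count (predC (mem X)) (enum 'I_n.+1) by rewrite size_filter.
  lia.
exists (take m L); split.
- by apply: take_uniq; apply/filter_uniq/enum_uniq.
- by rewrite size_take; apply/minn_idPl.
- by move=> x /mem_take; rewrite mem_filter => /andP[].
Qed.

End Basic.

Section Aff.
Variables (R : realFieldType) (E : finType).
Local Notation W := {ffun E -> R^o}.

Lemma free_sub (X : seq W) : exists Y, [/\ free Y, {subset Y <= X} & (<<Y>> = <<X>>)%VS].
Proof.
elim: X => [|x X [Y [fY sY eY]]]; first by exists [::]; split; rewrite ?nil_free.
case: (boolP (x \in <<X>>%VS)) => hx.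
- exists Y; split => //; first by move=> z /sY; rewrite inE => ->; rewrite orbT.
  by rewrite span_cons eY; apply/esym/addv_idPr; rewrite -memvE.
- exists (x :: Y); split.
  + by rewrite free_cons eY hx.
  + by move=> z; rewrite !inE => /orP[->|/sY ->]; rewrite ?orbT.
  + by rewrite !span_cons eY.
Qed.

Lemma affdim_gen (S : {ffun E -> R} -> Prop) (X : seq W) (c0 : R) : c0 != 0 ->
  (forall x, x \in X -> S x) -> (forall y, S y -> (y : W) \in <<X>>%VS) ->
  (forall y, S y -> \sum_i y i = c0) -> (0 < \dim <<X>>)%N ->
  has_affdim S (\dim <<X>>).-1.
Proof.
move=> c0n hX hS hc hd0.
set d := (\dim <<X>>).-1.
have hd : \dim <<X>> = d.+1 by rewrite /d prednK.
split.
- have [Y [fY sY eY]] := free_sub X.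
  have sz : size Y == d.+1 by rewrite -hd -eY (eqP fY).
  pose T : d.+1.-tuple W := Tuple sz.
  have fT : free T by [].
  exists (fun i : 'I_d.+1 => T`_i); split.
    move=> i; apply: hX; apply: sY; apply: mem_nth; rewrite (eqP sz); exact: ltn_ord.
  move=> c _ hc1; move/freeP: fT; apply; apply/ffunP => f.
  rewrite sum_ffunE [RHS]ffunE; rewrite -[RHS](hc1 f); apply: eq_bigr => i _; by rewrite ffunE.
- move=> x hSx hind.
  pose T : d.+2.-tuple W := [tuple (x i : W) | i < d.+2].
  have fT : free T.
    apply/freeP => k hk; apply: hind.
    + have e1 : \sum_f (\sum_i k i *: T`_i) f = 0.
        by rewrite hk; apply: big1 => f _; rewrite ffunE.
      have e2 : \sum_f (\sum_i k i *: T`_i) f = (\sum_i k i) * c0.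
        rewrite mulr_suml; under eq_bigr => f _ do rewrite sum_ffunE.
        rewrite exchange_big; apply: eq_bigr => i _.
        rewrite -(hc (x i) (hSx i)) mulr_sumr; apply: eq_bigr => f _.
        by rewrite ffunE nth_mktuple.
      by move: e2; rewrite e1 => /esym/eqP; rewrite mulf_eq0 (negbTE c0n) orbF => /eqP.
    + move=> f; have := congr1 (fun v : W => v f) hk; rewrite /= sum_ffunE => h.
      transitivity ((0 : W) f); last by rewrite ffunE.
      by rewrite -h; apply: eq_bigr => i _; rewrite ffunE nth_mktuple.
  have h1 : \dim <<T>> = d.+2 by rewrite (eqP fT) size_tuple.
  have h2 : (<<T>> <= <<X>>)%VS.
    apply/span_subvP => v /(nthP 0) [j]; rewrite size_tuple => hj <-.
    by rewrite (nth_mktuple _ _ (Ordinal hj)); apply: hS.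
  have := dimvS h2; rewrite h1 hd; lia.
Qed.

End Aff.

Section Main.
Variables (R : realFieldType) (n p : nat).
Hypotheses (hp4 : (4 <= p)%N) (hpn : (p < n)%N).
Variable e : edge n.
Hypothesis he : val e != (ord0, ord_max).
Local Notation V := 'I_n.+1.
Local Notation VV := {ffun edge n -> R^o}.
Local Notation Ev := (@Ev R n).
Local Notation Es := (@Es R n).
Local Notation D := (@D R n).

Definition inner (x : V) := (x != ord0) && (x != ord_max).
Definition pl (q : seq V) :=
  [&& uniq q, size q == p.+1, head ord0 q == ord0 & last ord0 q == ord_max].
Definition paths := [seq t <- enum {: p.+1.-tuple V} | is_pathp t].
Definition XA : seq VV := [seq (incid R t : VV) | t <- paths].
Definition XF : seq VV := [seq (incid R t : VV) | t <- paths & incid R t e == 0].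
Definition MF := (<<XF>>)%VS.

Lemma n0max : (ord0 : V) != ord_max.
Proof. by apply/eqP => /(congr1 val) /=; lia. Qed.

Lemma pl_tuple q : pl q -> exists t : p.+1.-tuple V, is_pathp t /\ tval t = q.
Proof.
case/and4P => uq sq h l; exists (Tuple sq); split => //.
rewrite /is_pathp /= uq nth0 h /=.
by move/eqP: sq => sq; rewrite -[X in nth _ _ X]/(p.+1.-1) -sq nth_last.
Qed.

Lemma memF q : pl q -> Es q e = 0 -> Es q \in MF.
Proof.
move=> hq he0; have [t [ht tq]] := pl_tuple hq.
have ut : uniq t by case/and3P: ht.
rewrite -tq -(incid_Es R ut); apply: memv_span.
apply/mapP; exists t => //; rewrite mem_filter (incid_Es R ut) tq he0 eqxx /=.
by rewrite mem_filter ht mem_enum.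
Qed.

Lemma pl_mk M : uniq M -> (forall x, x \in M -> inner x) -> size M = p.-1 ->
  pl (ord0 :: M ++ [:: ord_max]).
Proof.
move=> uM iM sM; apply/and4P; split.
- rewrite /= cat_uniq uM /= andbT mem_cat negb_or inE orbF -andbA; apply/and3P; split.
  + by apply/negP => /iM; rewrite /inner eqxx.
  + exact: n0max.
  + by apply/negP => /iM; rewrite /inner eqxx andbF.
- rewrite /= size_cat sM /=; apply/eqP; lia.
- exact: eqxx.
- by rewrite /= last_cat.
Qed.

Lemma permY A B (a y b : V) :
  perm_eq (A ++ [:: a, y, b & B]) (y :: (A ++ [:: a, b & B])).
Proof.
have -> : A ++ [:: a, y, b & B] = (A ++ [:: a]) ++ [:: y] ++ (b :: B) by rewrite -catA.
have -> : A ++ [:: a, b & B] = (A ++ [:: a]) ++ (b :: B) by rewrite -catA.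
by rewrite perm_catCA.
Qed.

Lemma uniqY A B (a y b : V) : uniq (A ++ [:: a, y, b & B]) =
  (y \notin (A ++ [:: a, b & B])) && uniq (A ++ [:: a, b & B]).
Proof. by rewrite (perm_uniq (permY A B a y b)). Qed.

Lemma memY A B (a y b : V) w : (w \in A ++ [:: a, y, b & B]) =
  (w == y) || (w \in A ++ [:: a, b & B]).
Proof. by rewrite (perm_mem (permY A B a y b)) inE. Qed.

Lemma repl_uniq A B (a x b z : V) : uniq (A ++ [:: a, x, b & B]) ->
  z \notin (A ++ [:: a, x, b & B]) -> uniq (A ++ [:: a, z, b & B]).
Proof.
rewrite !uniqY memY negb_or => /andP[_ ->] /andP[_ ->]; by rewrite andbT.
Qed.

Lemma repl_pl A B (a x b z : V) : pl (A ++ [:: a, x, b & B]) ->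
  z \notin (A ++ [:: a, x, b & B]) -> pl (A ++ [:: a, z, b & B]).
Proof.
case/and4P => u s h l hz; apply/and4P; split.
- exact: (repl_uniq u hz).
- by move: s; rewrite !size_cat /=.
- by case: A {u s l hz} h.
- by move: l; rewrite !last_cat.
Qed.

Lemma joins_rs (r s a b : V) : edge_joins e r s -> edge_joins e a b ->
  (a = r /\ b = s) \/ (a = s /\ b = r).
Proof.
rewrite /edge_joins.
case/orP=> /andP[/eqP h1 /eqP h2]; case/orP=> /andP[/eqP h3 /eqP h4].
- by left; split; congruence.
- by right; split; congruence.
- by right; split; congruence.
- by left; split; congruence.
Qed.

Lemma joins_e_sym (r s : V) : edge_joins e r s -> edge_joins e s r.
Proof. by rewrite joins_sym. Qed.

Lemma EvE (r s a b : V) : edge_joins e r s -> a \notin [:: r; s] -> Ev a b e = 0.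
Proof.
move=> hrs ha; rewrite ffunE; case: ifP => // h; exfalso.
by case: (joins_rs hrs h) => [[ea _]|[ea _]]; subst a; rewrite !inE eqxx ?orbT in ha.
Qed.

Lemma EvE' (r s a b : V) : edge_joins e r s -> b \notin [:: r; s] -> Ev a b e = 0.
Proof. by move=> hrs hb; rewrite Ev_sym; apply: EvE hrs hb. Qed.

Lemma Es_absent (r s x : V) q : edge_joins e r s -> x \in [:: r; s] -> x \notin q ->
  Es q e = 0.
Proof.
move=> hrs hx; elim: q => [|a [|b q] IH] hq; rewrite ?zeroE //.
rewrite Es_cons2 addE IH; last by move: hq; rewrite inE negb_or => /andP[].
rewrite addr0 ffunE; case: ifP => // h; exfalso.
move: hq hx; rewrite !inE !negb_or => /and3P[h1 h2 _].
case: (joins_rs hrs h) => [[ea eb]|[ea eb]]; subst a b; move=> /orP[] /eqP ex; subst x;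
  by rewrite ?eqxx in h1 h2.
Qed.

Lemma real A B (a x b z : V) : pl (A ++ [:: a, x, b & B]) ->
  Es (A ++ [:: a, x, b & B]) e = 0 -> z \notin (A ++ [:: a, x, b & B]) ->
  Es (A ++ [:: a, z, b & B]) e = 0 -> D a b x z \in MF.
Proof.
move=> hq h0 hz h0'; rewrite -(@Es_repl R n A B a x b z); apply: memvB; apply: memF => //.
exact: (repl_pl hq hz).
Qed.

Lemma build (K : seq V) (z : V) : uniq K -> (forall y, y \in K -> inner y) -> inner z ->
  z \notin K -> (size K <= p.-1)%N ->
  exists F : seq V, [/\ pl (ord0 :: (K ++ F) ++ [:: ord_max]),
     pl (ord0 :: (F ++ K) ++ [:: ord_max]), z \notin F & ord_max \notin F].
Proof.
move=> uK iK iz zK sK.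
have hsz : (p.-1 - size K + size [:: ord0, ord_max, z & K] <= n.+1)%N.
  by rewrite /=; lia.
have [F [uF sF hF]] := fill hsz.
have iF y : y \in F -> inner y.
  by move/hF; rewrite !inE !negb_or /inner => /and4P[-> -> _ _].
have dKF y : y \in F -> y \notin K.
  by move/hF; rewrite !inE !negb_or => /and4P[_ _ _ ->].
have uKF : uniq (K ++ F).
  rewrite cat_uniq uK uF andbT /=; apply/hasPn => y /dKF h; apply/negP => h'.
  by move: h; rewrite h'.
have iKF y : y \in K ++ F -> inner y by rewrite mem_cat => /orP[/iK|/iF].
have sKF : size (K ++ F) = p.-1 by rewrite size_cat sF; lia.
exists F; split.
- exact: pl_mk.
- apply: pl_mk.
  + by rewrite uniq_catC.
  + by move=> y; rewrite mem_cat orbC -mem_cat; apply: iKF.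
  + by rewrite size_cat addnC -size_cat.
- by apply/negP => /hF; rewrite !inE eqxx !orbT.
- by apply/negP => /hF; rewrite !inE eqxx !orbT.
Qed.

Lemma Es0c (a b : V) t : Ev a b e = 0 -> Es (b :: t) e = 0 -> Es [:: a, b & t] e = 0.
Proof. by move=> h1 h2; rewrite Es_cons2 addE h1 h2 addr0. Qed.

Lemma Es1 (a : V) : Es [:: a] = 0. Proof. by []. Qed.

Lemma tri (x : V) : [\/ x = ord0, x = ord_max | inner x].
Proof.
case: (eqVneq x ord0) => [->|h0]; first by constructor 1.
case: (eqVneq x ord_max) => [->|h1]; first by constructor 2.
by constructor 3; rewrite /inner h0 h1.
Qed.

Lemma inner0 (x : V) : inner x -> x != ord0.
Proof. by case/andP. Qed.
Lemma innerM (x : V) : inner x -> x != ord_max.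
Proof. by case/andP. Qed.
Lemma inner0' (x : V) : inner x -> ord0 != x.
Proof. by rewrite eq_sym; case/andP. Qed.
Lemma innerM' (x : V) : inner x -> ord_max != x.
Proof. by rewrite eq_sym; case/andP. Qed.

Lemma notin2 (x r s : V) : x != r -> x != s -> x \notin [:: r; s].
Proof. by move=> h1 h2; rewrite !inE negb_or h1 h2. Qed.

Ltac ne1 := first [ assumption | (rewrite eq_sym; assumption) | (apply: inner0; assumption)
  | (apply: inner0'; assumption) | (apply: innerM; assumption) | (apply: innerM'; assumption)
  | exact: n0max | (rewrite eq_sym; exact: n0max) | exact: isT
  | (match goal with H : is_true (~~ (?x \in ?F ++ _)) |- is_true (~~ (?x \in ?F)) =>
      move: H; rewrite mem_cat negb_or => /andP[H _]; exact: H end) ].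
Ltac nin := rewrite ?inE ?mem_cat ?negb_or ?orbF; repeat (apply/andP; split); ne1.

Lemma R1 (r s c x z : V) : edge_joins e r s -> inner r -> inner c -> inner x ->
  inner z -> uniq [:: r; s; c; x; z] -> D s c x z \in MF.
Proof.
move=> hrs ir ic ix iz.
rewrite /= !inE !negb_or => /and5P[/and4P[rs rc rx rz] /and3P[sc sx sz]
  /andP[cx cz] xz _].
have xrs : x \notin [:: r; s] by apply: notin2; rewrite eq_sym.
have zrs : z \notin [:: r; s] by apply: notin2; rewrite eq_sym.
have crs : c \notin [:: r; s] by apply: notin2; rewrite eq_sym.
case: (tri s) => [s0|sM|iS].
- subst s.
  have [F [hq _ zF _]] := @build [:: x; c] z (ltac:(by rewrite /= inE andbT eq_sym))
    (ltac:(by move=> y; rewrite !inE => /orP[]/eqP->)) iz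
    (ltac:(by rewrite !inE !negb_or eq_sym xz eq_sym cz)) (ltac:(by rewrite /=; clear -hp4; lia)).
  have uq := hq; case/and4P: uq => uq _ _ _.
  move: uq => /= /andP[]; rewrite !inE !negb_or => /and3P[_ _ h0F] _.
  apply: (@real [::] (F ++ [:: ord_max]) ord0 x c z hq).
  + rewrite cat0s Es_cons2 addE (EvE' _ hrs xrs) add0r.
    apply: (Es_absent (x := ord0) hrs); first by rewrite !inE eqxx orbT.
    by rewrite !inE !negb_or inner0' // inner0'.
  + nin.
  + rewrite cat0s Es_cons2 addE (EvE' _ hrs zrs) add0r.
    apply: (Es_absent (x := ord0) hrs); first by rewrite !inE eqxx orbT.
    by rewrite !inE !negb_or inner0' // inner0'.
- subst s.
  have [F [_ hq zF nF]] := @build [:: c; x] z (ltac:(by rewrite /= inE andbT))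
    (ltac:(by move=> y; rewrite !inE => /orP[]/eqP->)) iz
    (ltac:(by rewrite !inE !negb_or eq_sym cz eq_sym xz)) (ltac:(by rewrite /=; clear -hp4; lia)).
  have hMF : ord_max \notin rcons (ord0 :: F) c.
    rewrite -cats1; nin.
  rewrite D_sym.
  move: hq; rewrite -catA => hq.
  apply: (@real (ord0 :: F) [::] c x ord_max z hq).
  + rewrite Es_cat 2!Es_cons2 Es1 !addE (EvE _ hrs crs) (EvE _ hrs xrs) zeroE !addr0.
    apply: (Es_absent (x := ord_max) hrs _ hMF); by rewrite !inE eqxx orbT.
  + nin.
  + rewrite Es_cat 2!Es_cons2 Es1 !addE (EvE _ hrs crs) (EvE _ hrs zrs) zeroE !addr0.
    apply: (Es_absent (x := ord_max) hrs _ hMF); by rewrite !inE eqxx orbT.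
- have [F [hq _ zF nF]] := @build [:: s; x; c] z
    (ltac:(by rewrite /= !inE !negb_or sx sc eq_sym cx))
    (ltac:(by move=> y; rewrite !inE => /or3P[]/eqP->)) iz
    (ltac:(by rewrite !inE !negb_or eq_sym sz eq_sym xz eq_sym cz)) (ltac:(by rewrite /=; clear -hp4; lia)).
  have uq := hq; case/and4P: uq => uq _ _ _.
  move: uq => /= /andP[_ /andP[]]; rewrite !inE !negb_or => /and3P[_ _ hsF] _.
  apply: (@real [:: ord0] (F ++ [:: ord_max]) s x c z hq).
  + rewrite cat1s; apply: Es0c.
      by apply: (EvE (a := ord0) _ hrs); apply: notin2; [apply: inner0' | apply: inner0'].
    apply: Es0c; first exact: (EvE' _ hrs xrs).
    apply: (Es_absent (x := s) hrs); first by rewrite !inE eqxx orbT.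
    by rewrite !inE !negb_or sx sc.
  + nin.
  + rewrite cat1s; apply: Es0c.
      by apply: (EvE (a := ord0) _ hrs); apply: notin2; [apply: inner0' | apply: inner0'].
    apply: Es0c; first exact: (EvE' _ hrs zrs).
    apply: (Es_absent (x := s) hrs); first by rewrite !inE eqxx orbT.
    by rewrite !inE !negb_or sz sc.
Qed.

Lemma R2 (r s c z : V) : edge_joins e r s -> inner r -> inner c -> inner z ->
  uniq [:: r; s; c; z] -> D r s c z \in MF.
Proof.
move=> hrs ir ic iz.
rewrite /= !inE !negb_or => /and4P[/and3P[rs rc rz] /andP[sc sz] cz _].
have zrs : z \notin [:: r; s] by apply: notin2; rewrite eq_sym.
have crs : c \notin [:: r; s] by apply: notin2; rewrite eq_sym.
case: (tri s) => [s0|sM|iS].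
- subst s.
  have [F [hq _ zF nF]] := @build [:: c; r] z (ltac:(by rewrite /= inE andbT eq_sym))
    (ltac:(by move=> y; rewrite !inE => /orP[]/eqP->)) iz
    (ltac:(by rewrite !inE !negb_or eq_sym cz eq_sym rz)) (ltac:(by rewrite /=; clear -hp4; lia)).
  have uq := hq; case/and4P: uq => uq _ _ _.
  move: uq => /= /andP[]; rewrite !inE !negb_or => /and3P[_ _ h0F] _.
  rewrite D_sym.
  apply: (@real [::] (F ++ [:: ord_max]) ord0 c r z hq).
  + rewrite cat0s; apply: Es0c; first exact: (EvE' _ hrs crs).
    apply: Es0c; first exact: (EvE _ hrs crs).
    apply: (Es_absent (x := ord0) hrs); first by rewrite !inE eqxx orbT.
    nin.
  + nin.
  + rewrite cat0s; apply: Es0c; first exact: (EvE' _ hrs zrs).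
    apply: Es0c; first exact: (EvE _ hrs zrs).
    apply: (Es_absent (x := ord0) hrs); first by rewrite !inE eqxx orbT.
    nin.
- subst s.
  have [F [_ hq zF nF]] := @build [:: r; c] z (ltac:(by rewrite /= inE andbT))
    (ltac:(by move=> y; rewrite !inE => /orP[]/eqP->)) iz
    (ltac:(by rewrite !inE !negb_or eq_sym rz eq_sym cz)) (ltac:(by rewrite /=; clear -hp4; lia)).
  have hMF : ord_max \notin rcons (ord0 :: F) r.
    rewrite -cats1; nin.
  move: hq; rewrite -catA => hq.
  apply: (@real (ord0 :: F) [::] r c ord_max z hq).
  + rewrite Es_cat addE (Es_absent (x := ord_max) hrs _ hMF); last by rewrite !inE eqxx orbT.
    rewrite add0r; apply: Es0c; first exact: (EvE' _ hrs crs).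
    apply: Es0c; first exact: (EvE _ hrs crs).
    by rewrite Es1 zeroE.
  + nin.
  + rewrite Es_cat addE (Es_absent (x := ord_max) hrs _ hMF); last by rewrite !inE eqxx orbT.
    rewrite add0r; apply: Es0c; first exact: (EvE' _ hrs zrs).
    apply: Es0c; first exact: (EvE _ hrs zrs).
    by rewrite Es1 zeroE.
- have [F [hq _ zF nF]] := @build [:: r; c; s] z
    (ltac:(by rewrite /= !inE !negb_or rc rs eq_sym sc))
    (ltac:(by move=> y; rewrite !inE => /or3P[]/eqP->)) iz
    (ltac:(by rewrite !inE !negb_or eq_sym rz eq_sym cz eq_sym sz)) (ltac:(by rewrite /=; clear -hp4; lia)).
  have uq := hq; case/and4P: uq => uq _ _ _.
  move: uq => /= /andP[_ /andP[]]; rewrite !inE !negb_or => /and3P[_ _ hrF] _.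
  apply: (@real [:: ord0] (F ++ [:: ord_max]) r c s z hq).
  + rewrite cat1s; apply: Es0c.
      by apply: (EvE (a := ord0) _ hrs); apply: notin2; [apply: inner0' | apply: inner0'].
    apply: Es0c; first exact: (EvE' _ hrs crs).
    apply: Es0c; first exact: (EvE _ hrs crs).
    apply: (Es_absent (x := r) hrs); first by rewrite !inE eqxx.
    nin.
  + nin.
  + rewrite cat1s; apply: Es0c.
      by apply: (EvE (a := ord0) _ hrs); apply: notin2; [apply: inner0' | apply: inner0'].
    apply: Es0c; first exact: (EvE' _ hrs zrs).
    apply: Es0c; first exact: (EvE _ hrs zrs).
    apply: (Es_absent (x := r) hrs); first by rewrite !inE eqxx.
    nin.
Qed.

Lemma R3 (r s c y : V) : edge_joins e r s -> inner r -> inner s -> inner c -> inner y ->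
  uniq [:: r; s; c; y] -> D c y r s \in MF.
Proof.
move=> hrs ir iS ic iy.
rewrite /= !inE !negb_or => /and4P[/and3P[rs rc ry] /andP[sc sy] cy _].
have [F [hq _ sF nF]] := @build [:: c; r; y] s
    (ltac:(rewrite /=; nin))
    (ltac:(by move=> w; rewrite !inE => /or3P[]/eqP->)) iS
    (ltac:(nin)) (ltac:(by rewrite /=; clear -hp4; lia)).
have uq := hq; case/and4P: uq => uq _ _ _.
move: uq => /= /andP[_ /andP[_ /andP[]]]; rewrite !inE !negb_or => /andP[_ hrF] _.
apply: (@real [:: ord0] (F ++ [:: ord_max]) c r y s hq).
+ apply: (Es_absent (x := s) hrs); first by rewrite !inE eqxx orbT.
  nin.
+ nin.
+ apply: (Es_absent (x := r) hrs); first by rewrite !inE eqxx.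
  nin.
Qed.

Definition valid (r s c y : V) :=
  [&& edge_joins e r s, inner r, inner c, inner y & uniq [:: r; s; c; y]].
Definition K (r s c y : V) := D s c r y.

Lemma chain3 (W : zmodType) (a b c d : W) : a - d = (a - b) + (b - c) + (c - d).
Proof. by rewrite !addrA subrK subrK. Qed.

Lemma idS1 (a b c d c' d' : R) : a + b - c - d - (a + b - c' - d') = c' + d' - c - d.
Proof. ring. Qed.
Lemma idS2 (a b c d c' d' : R) : a + b - c - d - (a + c' - c - d') = b + d' - c' - d.
Proof. ring. Qed.
Lemma idS3 (a b c d c' d' : R) : a + b - c - d - (a + c' - d' - d) = b + d' - c' - c.
Proof. ring. Qed.

Lemma S1 r s c y y' : valid r s c y -> valid r s c y' -> K r s c y - K r s c y' \in MF.
Proof.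
case/and5P => hrs ir ic iy; rewrite /= !inE !negb_or => /and4P[/and3P[rs rc ry] /andP[sc sy] cy _].
case/and5P => _ _ _ iy'; rewrite /= !inE !negb_or => /and4P[/and3P[_ _ ry'] /andP[_ sy'] cy' _].
case: (eqVneq y y') => [<-|yy']; first by rewrite subrr mem0v.
have -> : K r s c y - K r s c y' = D s c y' y.
  by rewrite /K /D; apply/ffunP => f; rewrite !ffunE; apply: idS1.
apply: (R1 hrs ir ic iy' iy); rewrite /=; nin.
Qed.

Lemma S2 r s c c' : valid r s c c' -> valid r s c' c -> K r s c c' - K r s c' c \in MF.
Proof.
case/and5P => hrs ir ic ic'; rewrite /= !inE !negb_or => /and4P[/and3P[rs rc rc'] /andP[sc sc'] cc' _].
move=> _.
have -> : K r s c c' - K r s c' c = D r s c c'.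
  rewrite /K /D (@Ev_sym R n c' c) (@Ev_sym R n s c) (@Ev_sym R n s c'); apply/ffunP => f; rewrite !ffunE.
  match goal with |- ?a = ?b => change (@eq R a b) end; ring.
apply: (R2 hrs ir ic ic'); rewrite /=; nin.
Qed.

Lemma S3 r s c y : valid r s c y -> valid s r c y -> K r s c y - K s r c y \in MF.
Proof.
case/and5P => hrs ir ic iy; rewrite /= !inE !negb_or => /and4P[/and3P[rs rc ry] /andP[sc sy] cy _].
case/and5P => _ iS _ _ _.
have -> : K r s c y - K s r c y = D c y r s.
  rewrite /K /D (@Ev_sym R n s r) (@Ev_sym R n c r) (@Ev_sym R n c s); apply/ffunP => f.
  rewrite !ffunE; match goal with |- ?a = ?b => change (@eq R a b) end; ring.
apply: (R3 hrs ir iS ic iy); rewrite /=; nin.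
Qed.

Lemma SameRS r s c y c' y' : valid r s c y -> valid r s c' y' ->
  K r s c y - K r s c' y' \in MF.
Proof.
move=> v1 v2.
case: (eqVneq c c') => [ecc|cc']; first by subst c'; exact: S1.
have v3 : valid r s c c'.
  move: v1 v2; case/and5P => hrs ir ic iy; rewrite /= !inE !negb_or => /and4P[/and3P[rs rc ry] /andP[sc sy] cy _].
  case/and5P => _ _ ic' iy'; rewrite /= !inE !negb_or => /and4P[/and3P[_ rc' _] /andP[sc' _] _ _].
  rewrite /valid hrs ir ic ic' /=; nin.
have v4 : valid r s c' c.
  move: v1 v2; case/and5P => hrs ir ic iy; rewrite /= !inE !negb_or => /and4P[/and3P[rs rc ry] /andP[sc sy] cy _].
  case/and5P => _ _ ic' iy'; rewrite /= !inE !negb_or => /and4P[/and3P[_ rc' _] /andP[sc' _] _ _].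
  rewrite /valid hrs ir ic ic' /=; nin.
rewrite (chain3 _ (K r s c c') (K r s c' c)).
by apply: memvD; [apply: memvD|]; [apply: S1 | apply: S2 | apply: S1].
Qed.

Lemma Cls r s c y r' s' c' y' : valid r s c y -> valid r' s' c' y' ->
  K r s c y - K r' s' c' y' \in MF.
Proof.
move=> v1 v2; have hrs : edge_joins e r s by case/and5P: v1.
have hrs' : edge_joins e r' s' by case/and5P: v2.
case: (joins_rs hrs hrs') => [[er es]|[er es]]; subst r' s'; first exact: SameRS.
have v3 : valid r s c' y'.
  move: v1 v2; case/and5P => _ ir _ _ _.
  case/and5P => _ _ ic' iy'; rewrite /= !inE !negb_or => /and4P[/and3P[sr sc' sy'] /andP[rc' ry'] cy' _].
  rewrite /valid hrs ir ic' iy' /=; nin.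
rewrite (chain3 _ (K r s c' y') (K r s c' y') ) subrr addr0.
apply: memvD; first exact: SameRS.
exact: S3.
Qed.

Lemma split3 (w : seq V) j : (j.+2 < size w)%N ->
  w = take j w ++ [:: nth ord0 w j, nth ord0 w j.+1, nth ord0 w j.+2 & drop j.+3 w].
Proof.
move=> hj; rewrite -{1}(cat_take_drop j w); congr (_ ++ _).
rewrite (drop_nth ord0); last by clear -hj; lia.
rewrite (drop_nth ord0); last by clear -hj; lia.
by rewrite (drop_nth ord0).
Qed.

Lemma pl_size w : pl w -> size w = p.+1.
Proof. by case/and4P => _ /eqP. Qed.
Lemma pl_uniq w : pl w -> uniq w.
Proof. by case/and4P. Qed.
Lemma pl_nth0 w : pl w -> nth ord0 w 0 = ord0.
Proof. by case/and4P => _ _ /eqP h _; rewrite nth0. Qed.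
Lemma pl_nthp w : pl w -> nth ord0 w p = ord_max.
Proof.
case/and4P => _ /eqP s _ /eqP l.
by rewrite -[X in nth _ _ X]/(p.+1.-1) -s nth_last.
Qed.
Lemma pl_neq w i j : pl w -> (i < p.+1)%N -> (j < p.+1)%N ->
  (nth ord0 w i == nth ord0 w j) = (i == j).
Proof.
move=> hw hi hj; rewrite nth_uniq ?(pl_uniq hw) ?(pl_size hw) //.
Qed.
Lemma pl_inner w k : pl w -> (0 < k)%N -> (k < p)%N -> inner (nth ord0 w k).
Proof.
move=> hw h0 hp; apply/andP; split.
- rewrite -[X in _ != X](pl_nth0 hw) pl_neq //; last by clear -hp; lia.
  by rewrite -lt0n.
- rewrite -[X in _ != X](pl_nthp hw) pl_neq //; last by clear -hp; lia.
  by rewrite neq_ltn hp.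
Qed.
Lemma pl_mem w k : pl w -> (k < p.+1)%N -> nth ord0 w k \in w.
Proof. by move=> hw hk; apply: mem_nth; rewrite (pl_size hw). Qed.

Lemma Kflip r s c y : K r s c y = D c s r y.
Proof. by rewrite /K D_sym. Qed.

Lemma subKr' (a b : VV) : a - (a - b) = b.
Proof. by rewrite opprB addrC subrK. Qed.

Lemma Red w : pl w -> Es w e != 0 ->
  exists r s c y, valid r s c y /\ Es w - K r s c y \in MF.
Proof.
move=> hw hne.
have sw := pl_size hw; have uw := pl_uniq hw.
have [i hi] : exists i : 'I_p, edge_joins e (nth ord0 w i) (nth ord0 w i.+1).
  apply/existsP; apply: contraR hne => /existsPn hno.
  rewrite Es_sum sw /= sum_ffunE; apply/eqP; apply: big1 => j _.
  by rewrite ffunE (negbTE (hno j)).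
have hsz : (1 + size w <= n.+1)%N by rewrite sw; clear -hpn; lia.
have [F [_ sF hF]] := fill hsz.
case: F sF hF => [|y F] // _ hF; have hy := hF y (mem_head _ _).
have iy : inner y.
  apply/andP; split; apply/negP => /eqP ey; move/negP: hy; apply; rewrite ey.
  + by rewrite -(pl_nth0 hw); apply: pl_mem.
  + by rewrite -(pl_nthp hw); apply: pl_mem.
have hip := ltn_ord i.
move: hi; case: i hip => k /= hk _ hi.
case: (ltnP k.+2 p) => hk2.
- exists (nth ord0 w k.+1), (nth ord0 w k), (nth ord0 w k.+2), y; split.
  + apply/and5P; split.
    * by rewrite joins_sym.
    * by apply: (pl_inner hw); clear -hk2; lia.
    * by apply: (pl_inner hw); clear -hk2; lia.
    * exact: iy.
    * rewrite /= !inE !negb_or !(pl_neq hw); try (clear -hk2; lia).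
      have y1 : y != nth ord0 w k.+1 by apply/negP => /eqP ey; move/negP: hy; apply; rewrite ey; apply: (pl_mem hw); clear -hk2; lia.
      have y2 : y != nth ord0 w k by apply/negP => /eqP ey; move/negP: hy; apply; rewrite ey; apply: (pl_mem hw); clear -hk2; lia.
      have y3 : y != nth ord0 w k.+2 by apply/negP => /eqP ey; move/negP: hy; apply; rewrite ey; apply: (pl_mem hw); clear -hk2; lia.
      have n1 : (k.+1 != k)%N by apply/eqP; clear; lia.
      have n2 : (k.+1 != k.+2)%N by apply/eqP; clear; lia.
      have n3 : (k != k.+2)%N by apply/eqP; clear; lia.
      nin.
  + have hsplit := @split3 w k (ltac:(rewrite sw; clear -hk2; lia)).
    rewrite {1}hsplit /K -(@Es_repl R n (take k w) (drop k.+3 w) _ _ _ y) subKr'.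
    move: hw hy; rewrite {1 2}hsplit => hw hy.
    apply: memF; first exact: (repl_pl hw hy).
    apply: (Es_absent (r := nth ord0 w k.+1) (s := nth ord0 w k)); first by rewrite joins_sym.
      exact: mem_head.
    move: (pl_uniq hw); rewrite uniqY memY => /andP[h _].
    rewrite negb_or h andbT; apply/eqP => ey; move/negP: hy; apply; rewrite -ey.
    by rewrite memY eqxx.
- have k2 : (2 <= k)%N by clear -hk2 hp4; lia.
  exists (nth ord0 w k), (nth ord0 w k.+1), (nth ord0 w k.-1), y; split.
  + apply/and5P; split.
    * exact: hi.
    * by apply: (pl_inner hw); clear -k2 hk; lia.
    * by apply: (pl_inner hw); clear -k2 hk; lia.
    * exact: iy.
    * rewrite /= !inE !negb_or !(pl_neq hw); try (clear -hk k2; lia).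
      have y1 : y != nth ord0 w k by apply/negP => /eqP ey; move/negP: hy; apply; rewrite ey; apply: (pl_mem hw); clear -hk; lia.
      have y2 : y != nth ord0 w k.+1 by apply/negP => /eqP ey; move/negP: hy; apply; rewrite ey; apply: (pl_mem hw); clear -hk; lia.
      have y3 : y != nth ord0 w k.-1 by apply/negP => /eqP ey; move/negP: hy; apply; rewrite ey; apply: (pl_mem hw); clear -hk; lia.
      have n1 : (k != k.+1)%N by apply/eqP; clear; lia.
      have n2 : (k != k.-1)%N by apply/eqP; clear -k2; lia.
      have n3 : (k.+1 != k.-1)%N by apply/eqP; clear -k2; lia.
      nin.
  + have ek : k = k.-1.+1 by clear -k2; lia.
    have hsplit := @split3 w k.-1 (ltac:(rewrite sw; clear -hk k2; lia)).
    rewrite -ek in hsplit.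
    rewrite {1}hsplit Kflip -(@Es_repl R n (take k.-1 w) (drop k.+2 w) _ _ _ y) subKr'.
    move: hw hy; rewrite {1 2}hsplit => hw hy.
    apply: memF; first exact: (repl_pl hw hy).
    apply: (Es_absent (r := nth ord0 w k) (s := nth ord0 w k.+1)); first exact: hi.
      exact: mem_head.
    move: (pl_uniq hw); rewrite uniqY memY => /andP[h _].
    rewrite negb_or h andbT; apply/eqP => ey; move/negP: hy; apply; rewrite -ey.
    by rewrite memY eqxx.
Qed.

Lemma Core w1 w2 : pl w1 -> pl w2 -> Es w1 e != 0 -> Es w2 e != 0 -> Es w1 - Es w2 \in MF.
Proof.
move=> h1 h2 n1 n2.
have [r1 [s1 [c1 [y1 [v1 m1]]]]] := Red h1 n1.
have [r2 [s2 [c2 [y2 [v2 m2]]]]] := Red h2 n2.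
have -> : Es w1 - Es w2 = (Es w1 - K r1 s1 c1 y1) - (Es w2 - K r2 s2 c2 y2)
   + (K r1 s1 c1 y1 - K r2 s2 c2 y2).
  apply/ffunP => f; rewrite !ffunE.
  match goal with |- ?a = ?b => change (@eq R a b) end; ring.
by apply: memvD; [apply: memvB|apply: Cls].
Qed.

Lemma ex_rs : exists r s, edge_joins e r s /\ inner r.
Proof.
move: he; case: e => [[e1 e2] h12] /= hne.
case: (eqVneq e2 ord_max) => [e2M|e2M].
- subst e2; exists e1, ord_max; split; first by rewrite /edge_joins /= !eqxx.
  apply/andP; split.
  + by apply/eqP => e10; move: hne; rewrite e10 eqxx.
  + by apply/eqP => e1M; move: h12; rewrite e1M ltnn.
- exists e2, e1; split; first by rewrite /edge_joins /= !eqxx orbT.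
  apply/andP; split; last exact: e2M.
  by apply/eqP => e20; move: h12; rewrite e20.
Qed.

Lemma ex_avoid : exists q, pl q /\ Es q e = 0.
Proof.
have [r [s [hrs ir]]] := ex_rs.
have hsz : (p.-1 + size [:: ord0; ord_max; r] <= n.+1)%N by rewrite /=; clear -hpn hp4; lia.
have [F [uF sF hF]] := fill hsz.
have iF y : y \in F -> inner y by move/hF; rewrite !inE !negb_or /inner => /and3P[-> -> _].
have hq : pl (ord0 :: F ++ [:: ord_max]) by apply: pl_mk.
exists (ord0 :: F ++ [:: ord_max]); split; first exact: hq.
apply: (Es_absent (x := r) hrs); first exact: mem_head.
have rF : r \notin F by apply/negP => /hF; rewrite !inE eqxx !orbT.
nin.
Qed.

Lemma Ev_rs r s : edge_joins e r s -> Ev r s e = 1.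
Proof. by move=> h; rewrite ffunE h. Qed.

Lemma ex_use : exists q, pl q /\ Es q e != 0.
Proof.
have [r [s [hrs ir]]] := ex_rs.
have key A B : Es (A ++ [:: r, s & B]) e != 0.
  have := @Es_ge R n A B r s e; rewrite (Ev_rs hrs) => h.
  by apply/eqP => h0; move: h; rewrite h0 ler10.
have key' A B : Es (A ++ [:: s, r & B]) e != 0.
  have := @Es_ge R n A B s r e; rewrite (Ev_rs (joins_e_sym hrs)) => h.
  by apply/eqP => h0; move: h; rewrite h0 ler10.
have rs : r != s.
  apply/eqP => ers; subst s.
  by move: hrs; rewrite /edge_joins orbb => /andP[/eqP h1 /eqP h2]; move: (valP e); rewrite h1 h2 ltnn.
case: (tri s) => [s0|sM|iS].
- subst s.
  have hsz : (p.-2 + size [:: ord0; ord_max; r] <= n.+1)%N by rewrite /=; clear -hpn hp4; lia.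
  have [F [uF sF hF]] := fill hsz.
  have iF y : y \in F -> inner y by move/hF; rewrite !inE !negb_or /inner => /and3P[-> -> _].
  have rF : r \notin F by apply/negP => /hF; rewrite !inE eqxx !orbT.
  exists (ord0 :: (r :: F) ++ [:: ord_max]); split; last exact: (key' [::]).
  apply: pl_mk.
  + by apply/andP; split.
  + by move=> y; rewrite inE => /orP[/eqP ->|/iF].
  + by rewrite /= sF; clear -hp4; lia.
- subst s.
  have hsz : (p.-2 + size [:: ord0; ord_max; r] <= n.+1)%N by rewrite /=; clear -hpn hp4; lia.
  have [F [uF sF hF]] := fill hsz.
  have iF y : y \in F -> inner y by move/hF; rewrite !inE !negb_or /inner => /and3P[-> -> _].
  have rF : r \notin F by apply/negP => /hF; rewrite !inE eqxx !orbT.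
  exists (ord0 :: (F ++ [:: r]) ++ [:: ord_max]); split.
  + apply: pl_mk.
    * rewrite cat_uniq uF /= orbF andbT; exact: rF.
    * by move=> y; rewrite mem_cat inE => /orP[/iF|/eqP ->].
    * by rewrite size_cat sF /=; clear -hp4; lia.
  + by rewrite -catA -cat_cons; apply: (key (ord0 :: F) [::]).
- have hsz : ((p - 3) + size [:: ord0; ord_max; r; s] <= n.+1)%N by rewrite /=; clear -hpn hp4; lia.
  have [F [uF sF hF]] := fill hsz.
  have iF y : y \in F -> inner y by move/hF; rewrite !inE !negb_or /inner => /and4P[-> -> _ _].
  have rF : r \notin F by apply/negP => /hF; rewrite !inE eqxx !orbT.
  have sF' : s \notin F by apply/negP => /hF; rewrite !inE eqxx !orbT.
  exists (ord0 :: [:: r, s & F] ++ [:: ord_max]); split; last exact: (key [:: ord0]).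
  apply: pl_mk.
  + apply/andP; split; first by rewrite inE negb_or rs.
    by apply/andP; split.
  + by move=> y; rewrite !inE => /or3P[/eqP ->|/eqP ->|/iF].
  + by rewrite /= sF; clear -hp4; lia.
Qed.

Lemma paths_mem (t : p.+1.-tuple V) : (t \in paths) = is_pathp t.
Proof. by rewrite mem_filter mem_enum andbT. Qed.

Lemma incid_path (t : p.+1.-tuple V) : is_pathp t -> (incid R t : VV) = Es t.
Proof. by case/and3P => ut _ _; apply: incid_Es. Qed.

Lemma pl_of_path (t : p.+1.-tuple V) : is_pathp t -> pl t.
Proof.
case/and3P => ut h0 hp; apply/and4P; split.
- exact: ut.
- by rewrite size_tuple.
- by rewrite -nth0.
- by rewrite -(nth_last ord0) size_tuple.
Qed.

Lemma incid_ge0 (t : p.+1.-tuple V) f : 0 <= incid R t f.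
Proof. by rewrite ffunE; case: ifP. Qed.

Lemma sum_incid (t : p.+1.-tuple V) : is_pathp t -> \sum_f incid R t f = p%:R.
Proof.
move=> ht; have := incid_path ht => h.
transitivity (\sum_f Es t f); first by apply: eq_bigr => f _; rewrite -h.
by rewrite sum_Es ?size_tuple //; case/and3P: ht.
Qed.

Lemma P_vert (t : p.+1.-tuple V) : is_pathp t -> @path_polytope R n p (incid R t).
Proof.
move=> ht; exists [ffun t' => (t' == t)%:R]; split.
- by move=> t'; rewrite ffunE ler0n.
- move=> t' h; rewrite ffunE; case: eqP => // et; by move: h; rewrite et ht.
- rewrite (bigD1 t) //= !ffunE eqxx big1 ?addr0 // => t' /negbTE h.
  by rewrite ffunE h.
- move=> f; rewrite (bigD1 t) //= ffunE [X in X * _]ffunE eqxx mul1r big1 ?addr0 // => t' /negbTE h.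
  by rewrite ffunE h mul0r.
Qed.

Lemma poly_decomp (y : {ffun edge n -> R}) (lam : {ffun p.+1.-tuple V -> R}) :
  (forall f, y f = \sum_t lam t * incid R t f) ->
  (y : VV) = \sum_t lam t *: (incid R t : VV).
Proof.
move=> hy; apply/ffunP => f; rewrite sum_ffunE hy.
rewrite [RHS](eq_bigr (fun t => lam t * incid R t f)) //.
by move=> t _; rewrite ffunE.
Qed.

Lemma P_span y : @path_polytope R n p y -> (y : VV) \in <<XA>>%VS.
Proof.
case=> lam [h0 hnp h1 hy]; rewrite (poly_decomp hy); apply: memv_suml => t _.
case: (boolP (is_pathp t)) => ht.
- apply: memvZ; apply: memv_span; apply/mapP; exists t => //; by rewrite paths_mem.
- by rewrite hnp // scale0r mem0v.
Qed.

Lemma P_sum y : @path_polytope R n p y -> \sum_f y f = p%:R.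
Proof.
case=> lam [h0 hnp h1 hy].
under eq_bigr => f _ do rewrite hy.
rewrite exchange_big /=.
transitivity (\sum_t lam t * p%:R).
  apply: eq_bigr => t _; rewrite -mulr_sumr.
  case: (boolP (is_pathp t)) => ht; first by rewrite sum_incid.
  by rewrite hnp // !mul0r.
by rewrite -mulr_suml h1 mul1r.
Qed.

Lemma P_ge0 y : @path_polytope R n p y -> 0 <= y e.
Proof.
case=> lam [h0 hnp h1 hy]; rewrite hy; apply: sumr_ge0 => t _.
by apply: mulr_ge0; [apply: h0 | apply: incid_ge0].
Qed.

Lemma F_span y : @path_polytope R n p y -> y e = 0 -> (y : VV) \in <<XF>>%VS.
Proof.
case=> lam [h0 hnp h1 hy] hye; rewrite (poly_decomp hy); apply: memv_suml => t _.
case: (boolP (is_pathp t)) => ht; last by rewrite hnp // scale0r mem0v.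
case: (eqVneq (incid R t e) 0) => hte.
- apply: memvZ; apply: memv_span; apply/mapP; exists t => //.
  by rewrite mem_filter hte eqxx paths_mem.
- have : lam t * incid R t e = 0.
    move: hye; rewrite hy => /eqP; rewrite psumr_eq0; last first.
      by move=> i _; apply: mulr_ge0; [apply: h0 | apply: incid_ge0].
    by move=> /allP /(_ t (mem_index_enum _)) /eqP.
  move/eqP; rewrite mulf_eq0 (negbTE hte) orbF => /eqP ->.
  by rewrite scale0r mem0v.
Qed.

Lemma XF_e0 v : v \in <<XF>>%VS -> v e = 0.
Proof.
move=> hv; rewrite (coord_span (X := in_tuple XF) hv) sum_ffunE.
apply: big1 => i _; rewrite ffunE.
have : (in_tuple XF)`_i \in XF by apply: mem_nth; exact: ltn_ord.
case/mapP => t; rewrite mem_filter => /andP[/eqP h _] ->.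
by rewrite h scaler0.
Qed.

Lemma dimF_pos : (0 < \dim <<XF>>)%N.
Proof.
have [q [hq hq0]] := ex_avoid.
rewrite lt0n dimv_eq0; apply/negP => /eqP h0.
have := memF hq hq0; rewrite /MF h0 memv0 => /eqP hz.
have := @sum_Es R n q (pl_uniq hq); rewrite (pl_size hq) hz.
rewrite (eq_bigr (fun _ => 0)); last by move=> f _; rewrite ffunE.
rewrite big1_eq /= => /eqP; rewrite eq_sym pnatr_eq0; clear -hp4; lia.
Qed.

Lemma dimXA : \dim <<XA>> = (\dim <<XF>>).+1.
Proof.
have [q0 [hq0 hq0e]] := ex_use.
have [t0 [ht0 tq]] := pl_tuple hq0.
set x0 : VV := incid R t0.
have hx0 : x0 = Es q0 by rewrite /x0 incid_path // tq.
have x0e : x0 e != 0 by rewrite hx0.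
have hXA : <<XA>>%VS = (<<XF>> + <[x0]>)%VS.
  apply/eqP; rewrite eqEsubv; apply/andP; split.
  - apply/span_subvP => x /mapP [t]; rewrite paths_mem => ht ->.
    case: (eqVneq (incid R t e) 0) => hte.
      rewrite -[X in X \in _]addr0; apply: memv_add; last exact: mem0v.
      apply: memv_span; apply/mapP; exists t => //; by rewrite mem_filter hte eqxx paths_mem.
    rewrite -[X in X \in _](subrK x0); apply: memv_add; last exact: memv_line.
    rewrite incid_path // hx0; apply: Core.
    + exact: pl_of_path.
    + exact: hq0.
    + by rewrite -incid_path.
    + exact: hq0e.
  - rewrite subv_add; apply/andP; split.
    + apply: sub_span => x /mapP [t]; rewrite mem_filter => /andP[_ ht] ->.
      by apply/mapP; exists t.
    + rewrite -memvE; apply: memv_span; apply/mapP; exists t0 => //; by rewrite paths_mem.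
rewrite hXA dimv_disjoint_sum.
  have nx0 : x0 != 0 by apply: contraNneq x0e => ->; rewrite ffunE.
  by rewrite dim_vline nx0 addn1.
apply/eqP; rewrite -subv0; apply/subvP => v; rewrite memv_cap => /andP[hv /vlineP[k hk]].
rewrite memv0; have := XF_e0 hv; rewrite hk ffunE => /eqP; rewrite mulf_eq0 (negbTE x0e) orbF.
by move/eqP => ->; rewrite scale0r.
Qed.

Lemma main_sec :
  (forall y, @path_polytope R n p y -> 0 <= y e) /\
  exists d : nat,
    has_affdim (@path_polytope R n p) d.+1 /\
    has_affdim (fun y => @path_polytope R n p y /\ y e = 0) d.
Proof.
have pn0 : (p%:R : R) != 0 by rewrite pnatr_eq0; clear -hp4; apply/eqP; lia.
split; first exact: P_ge0.
exists (\dim <<XF>>).-1; split.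
- have H : has_affdim (@path_polytope R n p) (\dim <<XA>>).-1.
    apply: (@affdim_gen R (edge n) _ XA p%:R pn0).
    + by move=> x /mapP [t]; rewrite paths_mem => ht ->; apply: P_vert.
    + exact: P_span.
    + exact: P_sum.
    + by rewrite dimXA.
  by move: H; rewrite dimXA /= prednK //; exact: dimF_pos.
- apply: (@affdim_gen R (edge n) _ XF p%:R pn0).
  + move=> x /mapP [t]; rewrite mem_filter paths_mem => /andP[/eqP h ht] ->.
    by split; [apply: P_vert | ].
  + by move=> y [hy hye]; apply: F_span.
  + by move=> y [hy _]; apply: P_sum.
  + exact: dimF_pos.
Qed.

End Main.


Unset Implicit Arguments.

Theorem mainTheorem19 (R : realFieldType) (n p : nat) (hp4 : (4 <= p)%N) (hpn : (p < n)%N)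
  (e : edge n) (he : val e != (ord0, ord_max)) :
  (* y_e >= 0 is valid for the polytope ... *)
  (forall y, @path_polytope R n p y -> 0 <= y e) /\
  (* ... and the face it defines has dimension dim P - 1 *)
  exists d : nat,
    has_affdim (@path_polytope R n p) d.+1 /\
    has_affdim (fun y => @path_polytope R n p y /\ y e = 0) d.
Proof. exact: (main_sec R hp4 hpn he). Qed.
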